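(* Let $(C,\mathbf A)$ be an $\mathbf a$-output-stable pair ($C\in\mathcal L(\mathcal X,\mathcal Y)$, $\mathbf A\in\mathcal L(\mathcal X)^d$) and let $\mathcal G^{\mathbf a}_{C,\mathbf A}$ be its abelianized observability gramian. Then $$\mathcal G^{\mathbf a}_{C,\mathbf A}-A_1^*\mathcal G^{\mathbf a}_{C,\mathbf A}A_1-\cdots-A_d^*\mathcal G^{\mathbf a}_{C,\mathbf A}A_d\le C^*C.$$ Moreover, the following are equivalent: (1) equality holds in this inequality; (2) $\mathbf A$ is $C$-abelian, i.e. $C\mathbf A^v=C\mathbf A^u$ whenever $u,v\in\mathcal F_d$ with $\mathbf a(v)=\mathbf a(u)$; (3) $\mathcal G^{\mathbf a}_{C,\mathbf A}=\mathcal G_{C,\mathbf A}$.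
   Context: $\mathcal F_d$: free semigroup of words on $\{1,\dots,d\}$; for $v=i_N\cdots i_1$, $\mathbf A^v=A_{i_N}\cdots A_{i_1}$. The abelianization map $\mathbf a\colon\mathcal F_d\to\mathbb Z^d_+$ sends $i_N\cdots i_1$ to $(n_1,\dots,n_d)$ with $n_k=\#\{\ell:i_\ell=k\}$. For $\mathbf n\in\mathbb Z^d_+$: $|\mathbf n|=n_1+\cdots+n_d$, $\mathbf n!=n_1!\cdots n_d!$, $\boldsymbol\lambda^{\mathbf n}=\lambda_1^{n_1}\cdots\lambda_d^{n_d}$. The Arveson space $\mathcal H_{\mathcal Y}(k_d)$ consists of power series $f(\boldsymbol\lambda)=\sum_{\mathbf n}f_{\mathbf n}\boldsymbol\lambda^{\mathbf n}$ ($f_{\mathbf n}\in\mathcal Y$) with $\|f\|^2=\sum_{\mathbf n}\frac{\mathbf n!}{|\mathbf n|!}\|f_{\mathbf n}\|^2<\infty$ (reproducing kernel $1/(1-\langle\boldsymbol\lambda,\boldsymbol\zeta\rangle)$ on the unit ball of $\mathbb C^d$). $(C,\mathbf A)$ is $\mathbf a$-output-stable if $\widehat{\mathcal O}^{\mathbf a}_{C,\mathbf A}\colon x\mapsto\sum_{\mathbf n}\big(\sum_{v\in\mathbf a^{-1}(\mathbf n)}C\mathbf A^vx\big)\boldsymbol\lambda^{\mathbf n}$ (formally $C(I-\lambda_1A_1-\cdots-\lambda_dA_d)^{-1}x$) maps $\mathcal X$ boundedly into $\mathcal H_{\mathcal Y}(k_d)$; then $\mathcal G^{\mathbf a}_{C,\mathbf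 A}=(\widehat{\mathcal O}^{\mathbf a}_{C,\mathbf A})^*\widehat{\mathcal O}^{\mathbf a}_{C,\mathbf A}=\sum_{\mathbf n}\frac{\mathbf n!}{|\mathbf n|!}\sum_{u,v\in\mathbf a^{-1}(\mathbf n)}(\mathbf A^v)^*C^*C\mathbf A^u$. The (noncommutative) observability gramian is $\mathcal G_{C,\mathbf A}=\sum_{v\in\mathcal F_d}(\mathbf A^v)^*C^*C\mathbf A^v$ (strong operator sum). *)

(* Defs.v *)
From HB Require Import structures.
From mathcomp Require Import all_boot all_order all_algebra.
From mathcomp Require Import reals.
From mathcomp.real_closed Require Import complex.
Set Implicit Arguments. Unset Strict Implicit. Unset Printing Implicit Defensive.
Import Order.TTheory GRing.Theory Num.Theory.
Local Open Scope ring_scope.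

Section Defs.
Variable R : realType.
Local Notation K := (R[i]).

Definition is_hilbert (X : lmodType K) (ip : X -> X -> K) : Prop :=
  [/\ (forall (a : K) (x y z : X), ip (a *: x + y) z = a * ip x z + ip y z),
      (forall x y : X, ip x y = (ip y x)^*),
      (forall x : X, 0 <= ip x x),
      (forall x : X, ip x x = 0 -> x = 0) &
      (forall u : nat -> X,
         (forall e : K, 0 < e -> exists N, forall m n, (N <= m)%N -> (N <= n)%N ->
             ip (u m - u n) (u m - u n) < e) ->
         exists l : X, forall e : K, 0 < e -> exists N, forall n, (N <= n)%N ->
             ip (u n - l) (u n - l) < e)].

Definition bounded_linear (X Y : lmodType K) (ipX : X -> X -> K)
  (ipY : Y -> Y -> K) (f : X -> Y) : Prop :=
  (forall (a : K) (x y : X), f (a *: x + y) = a *: f x + f y) /\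
  (exists M : K, forall x, ipY (f x) (f x) <= M * ipX x x).

Definition is_adjoint (X Y : lmodType K) (ipX : X -> X -> K)
  (ipY : Y -> Y -> K) (f : X -> Y) (g : Y -> X) : Prop :=
  forall x y, ipY (f x) y = ipX x (g y).

Definition vconverges (X : lmodType K) (ipX : X -> X -> K) (u : nat -> X) (l : X) :=
  forall e : K, 0 < e -> exists N, forall n, (N <= n)%N -> ipX (u n - l) (u n - l) < e.

Definition sconverges (s : nat -> K) (l : K) :=
  forall e : K, 0 < e -> exists N, forall n, (N <= n)%N -> `|s n - l| < e.

Variable d : nat.

(* words of F_d are sequences [:: i_N; ...; i_1];  A^v = A_{i_N} ... A_{i_1} *)
Definition wact (X : Type) (A : 'I_d -> X -> X) (v : seq 'I_d) (x : X) : X :=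
  foldr (fun i y => A i y) x v.

(* (A^v)^* = A_{i_1}^* ... A_{i_N}^*, given the adjoints As i = (A i)^* *)
Definition wadj (X : Type) (As : 'I_d -> X -> X) (v : seq 'I_d) (x : X) : X :=
  foldl (fun y i => As i y) x v.

Definition abel (v : seq 'I_d) : {ffun 'I_d -> nat} := [ffun j => count_mem j v].

Definition mlen (n : {ffun 'I_d -> nat}) : nat := (\sum_(i < d) n i)%N.
Definition mfact (n : {ffun 'I_d -> nat}) : nat := (\prod_(i < d) (n i)`!)%N.

(* coefficient of lambda^n in  C (I - lambda_1 A_1 - ... - lambda_d A_d)^{-1} x *)
Definition ocoef (X Y : lmodType K) (C : X -> Y) (A : 'I_d -> X -> X)
  (n : {ffun 'I_d -> nat}) (x : X) : Y :=
  \sum_(t : (mlen n).-tuple 'I_d | abel t == n) C (wact A t x).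

Definition mweight (n : {ffun 'I_d -> nat}) : K :=
  (mfact n)%:R / ((mlen n)`!)%:R.

(* homogeneous degree-k part of the Arveson-space inner product
   < O^a x, O^a y >_{H_Y(k_d)} *)
Definition oblock (X Y : lmodType K) (ipY : Y -> Y -> K) (C : X -> Y)
  (A : 'I_d -> X -> X) (k : nat) (x y : X) : K :=
  \sum_(m : {ffun 'I_d -> 'I_k.+1} | (\sum_(i < d) (m i : nat))%N == k)
     let n := [ffun i => (m i : nat)] in
     mweight n * ipY (ocoef C A n x) (ocoef C A n y).

Definition opartial (X Y : lmodType K) (ipY : Y -> Y -> K) (C : X -> Y)
  (A : 'I_d -> X -> X) (N : nat) (x y : X) : K :=
  \sum_(k < N.+1) oblock ipY C A k x y.

(* (C, A) is a-output-stable: O^a_{C,A} maps X boundedly into H_Y(k_d) *)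
Definition a_output_stable (X Y : lmodType K) (ipX : X -> X -> K)
  (ipY : Y -> Y -> K) (C : X -> Y) (A : 'I_d -> X -> X) : Prop :=
  exists M : K, forall x N, opartial ipY C A N x x <= M * ipX x x.

(* G = (O^a)^* O^a, i.e. <G x, y>_X = <O^a x, O^a y>_{H_Y(k_d)} *)
Definition is_a_gramian (X Y : lmodType K) (ipX : X -> X -> K)
  (ipY : Y -> Y -> K) (C : X -> Y) (A : 'I_d -> X -> X) (G : X -> X) : Prop :=
  forall x y, sconverges (fun N => opartial ipY C A N x y) (ipX (G x) y).

(* partial sums  sum_{|v| <= N} (A^v)^* C^* C A^v x  of the noncommutative
   observability gramian *)
Definition ncpartial (X Y : lmodType K) (C : X -> Y) (Cs : Y -> X)
  (A As : 'I_d -> X -> X) (N : nat) (x : X) : X :=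
  \sum_(k < N.+1) \sum_(t : k.-tuple 'I_d) wadj As t (Cs (C (wact A t x))).

Definition C_abelian (X Y : Type) (C : X -> Y) (A : 'I_d -> X -> X) : Prop :=
  forall u v : seq 'I_d, abel u = abel v -> forall x, C (wact A v x) = C (wact A u x).

End Defs.

(* Main.v *)
Require Import Defs.
From HB Require Import structures.
From mathcomp Require Import all_boot all_order all_algebra.
From mathcomp Require Import reals.
From mathcomp.real_closed Require Import complex.
From mathcomp Require Import ring.
Set Implicit Arguments. Unset Strict Implicit. Unset Printing Implicit Defensive.
Import Order.TTheory GRing.Theory Num.Theory.
Local Open Scope ring_scope.

Section IP.
Variable R : realType.
Local Notation K := (R[i]).
Variables (V : lmodType K) (ip : V -> V -> K).
Hypothesis hV : is_hilbert ip.

Lemma ipZDl a x y z : ip (a *: x + y) z = a * ip x z + ip y z.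
Proof. by case: hV. Qed.
Lemma ipC x y : ip x y = (ip y x)^*.
Proof. by case: hV. Qed.
Lemma ip_ge0 x : 0 <= ip x x.
Proof. by case: hV. Qed.
Lemma ip_eq0 x : ip x x = 0 -> x = 0.
Proof. by case: hV => _ _ _ H _; apply: H. Qed.

Lemma ipDl x y z : ip (x + y) z = ip x z + ip y z.
Proof. by have := ipZDl 1 x y z; rewrite scale1r mul1r. Qed.
Lemma ip0l z : ip 0 z = 0.
Proof.
have := ipDl 0 0 z; rewrite addr0 -{1}[ip 0 z]addr0 => /addrI.
by move=> <-.
Qed.
Lemma ipZl a x z : ip (a *: x) z = a * ip x z.
Proof. by rewrite -[a *: x]addr0 ipZDl ip0l addr0. Qed.
Lemma ipNl x z : ip (- x) z = - ip x z.
Proof. by rewrite -scaleN1r ipZl mulN1r. Qed.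
Lemma ipBl x y z : ip (x - y) z = ip x z - ip y z.
Proof. by rewrite ipDl ipNl. Qed.
Lemma ip_suml I (r : seq I) (P : pred I) (F : I -> V) z :
  ip (\sum_(i <- r | P i) F i) z = \sum_(i <- r | P i) ip (F i) z.
Proof.
by apply: (big_morph (fun v => ip v z)); [move=> *; apply: ipDl | apply: ip0l].
Qed.
Lemma ipDr x y z : ip z (x + y) = ip z x + ip z y.
Proof. by rewrite ipC ipDl rmorphD /= -!ipC. Qed.
Lemma ipZr a x z : ip z (a *: x) = a^* * ip z x.
Proof. by rewrite ipC ipZl rmorphM /= -ipC. Qed.
Lemma ip0r z : ip z 0 = 0.
Proof. by rewrite ipC ip0l rmorph0 /=. Qed.
Lemma ipNr x z : ip z (- x) = - ip z x.
Proof. by rewrite ipC ipNl rmorphN /= -ipC. Qed.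
Lemma ipBr x y z : ip z (x - y) = ip z x - ip z y.
Proof. by rewrite ipDr ipNr. Qed.
Lemma ip_sumr I (r : seq I) (P : pred I) (F : I -> V) z :
  ip z (\sum_(i <- r | P i) F i) = \sum_(i <- r | P i) ip z (F i).
Proof.
by apply: (big_morph (fun v => ip z v)); [move=> *; apply: ipDr | apply: ip0r].
Qed.
Lemma ip_conj x : (ip x x)^* = ip x x.
Proof. by rewrite -ipC. Qed.

Lemma ip_ext u v : (forall y, ip u y = ip v y) -> u = v.
Proof.
move=> H; apply/eqP; rewrite -subr_eq0; apply/eqP/ip_eq0.
by rewrite ipBl H subrr.
Qed.

Lemma ip_CS w y : `|ip w y| ^+ 2 <= ip w w * ip y y.
Proof.
have [y0|ny0] := eqVneq (ip y y) 0.
  by rewrite (ip_eq0 y0) ip0r normr0 expr0n /= ip0r mulr0.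
have ypos : 0 < ip y y by rewrite lt_def ny0 ip_ge0.
set a := ip y y; set t := ip w y.
have E : ip (a *: w - t *: y) (a *: w - t *: y) = a * (ip w w * a - t * t^*).
  rewrite ipBl !ipBr !ipZl !ipZr (geC0_conj (ip_ge0 y)) -/a -/t [ip y w]ipC -/t.
  ring.
have := ip_ge0 (a *: w - t *: y); rewrite E normCK.
by rewrite pmulr_rge0 // subr_ge0.
Qed.

End IP.

Section Conv.
Variable R : realType.
Local Notation K := (R[i]).
Implicit Types (f g : nat -> K) (a b : K).

Lemma sconv_ext f g a : (forall n, f n = g n) -> sconverges f a -> sconverges g a.
Proof.
move=> fg H e e0; have [N HN] := H e e0; exists N => n Nn; rewrite -fg; exact: HN.
Qed.

Lemma sconv_cst a : sconverges (fun _ => a) a.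
Proof. by move=> e e0; exists 0%N => n _; rewrite subrr normr0. Qed.

Lemma sconvD f g a b : sconverges f a -> sconverges g b ->
  sconverges (fun n => f n + g n) (a + b).
Proof.
move=> Hf Hg e e0.
have e20 : 0 < e / 2 by rewrite divr_gt0 // ltr0n.
have [N1 H1] := Hf _ e20; have [N2 H2] := Hg _ e20.
exists (maxn N1 N2) => n; rewrite geq_max => /andP[n1 n2].
have -> : f n + g n - (a + b) = (f n - a) + (g n - b) by ring.
rewrite (splitr e); apply: le_lt_trans (ler_normD _ _) _.
by rewrite ltrD // ?H1 ?H2.
Qed.

Lemma sconvZ c f a : sconverges f a -> sconverges (fun n => c * f n) (c * a).
Proof.
move=> Hf e e0.
have c1 : 0 < `|c| + 1 by rewrite ltr_pwDr ?ltr01.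
have [N HN] := Hf (e / (`|c| + 1)) (divr_gt0 e0 c1).
exists N => n Nn; rewrite -mulrBr normrM.
have := HN n Nn => h.
have h2 : `|c| * `|f n - a| <= (`|c| + 1) * `|f n - a|.
  by rewrite ler_wpM2r // lerDl ler01.
apply: le_lt_trans h2 _.
by rewrite mulrC -ltr_pdivlMr.
Qed.

Lemma sconvN f a : sconverges f a -> sconverges (fun n => - f n) (- a).
Proof.
move=> H; have := sconvZ (-1) H; rewrite mulN1r => H'.
by apply: sconv_ext H' => n; rewrite mulN1r.
Qed.

Lemma sconvB f g a b : sconverges f a -> sconverges g b ->
  sconverges (fun n => f n - g n) (a - b).
Proof. by move=> Hf Hg; apply: sconvD Hf (sconvN Hg). Qed.

Lemma sconv_sum (I : Type) (r : seq I) (P : pred I) (F : I -> nat -> K) (L : I -> K) :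
  (forall i, sconverges (F i) (L i)) ->
  sconverges (fun n => \sum_(i <- r | P i) F i n) (\sum_(i <- r | P i) L i).
Proof.
move=> H; elim: r => [|i r IH].
  by apply: (sconv_ext (f := fun _ => 0)) => [n|]; rewrite ?big_nil //; apply: sconv_cst.
case E: (P i).
  apply: (sconv_ext (f := fun n => F i n + \sum_(j <- r | P j) F j n)) => [n|].
    by rewrite big_cons E.
  by rewrite big_cons E; apply: sconvD.
apply: (sconv_ext (f := fun n => \sum_(j <- r | P j) F j n)) => [n|].
  by rewrite big_cons E.
by rewrite big_cons E.
Qed.

Lemma sconv_shift f a : sconverges f a -> sconverges (fun n => f n.+1) a.
Proof. by move=> H e e0; have [N HN] := H e e0; exists N => n Nn; apply: HN; apply: leqW. Qed.

Lemma sconv_uniq f a b : sconverges f a -> sconverges f b -> a = b.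
Proof.
move=> Ha Hb; apply/eqP; rewrite -subr_eq0 -normr_eq0; apply/eqP.
apply/le_anti/andP; split; last exact: normr_ge0.
apply/ler_addgt0Pr => e e0; rewrite add0r.
have e20 : 0 < e / 2 by rewrite divr_gt0 // ltr0n.
have [N1 H1] := Ha _ e20; have [N2 H2] := Hb _ e20.
have n1 := H1 (maxn N1 N2) (leq_maxl _ _); have n2 := H2 (maxn N1 N2) (leq_maxr _ _).
rewrite (splitr e); apply: ltW; apply: le_lt_trans (ler_distD (f (maxn N1 N2)) _ _) _.
by rewrite distrC ltrD.
Qed.

Lemma sconv_ge0 f a (N0 : nat) : (forall n, (N0 <= n)%N -> 0 <= f n) ->
  sconverges f a -> 0 <= a.
Proof.
move=> Hf Ha.
suff : `|a| - a = 0 by move/eqP; rewrite subr_eq0 => /eqP <-.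
apply/eqP; rewrite -normr_eq0; apply/eqP.
apply/le_anti/andP; split; last exact: normr_ge0.
apply/ler_addgt0Pr => e e0; rewrite add0r.
have e20 : 0 < e / 2 by rewrite divr_gt0 // ltr0n.
have [N HN] := Ha _ e20.
have n1 := HN (maxn N N0) (leq_maxl _ _).
have f0 := Hf (maxn N N0) (leq_maxr _ _).
set x := f (maxn N N0) in n1 f0.
have -> : `|a| - a = (`|a| - `|x|) + (x - a) by rewrite (ger0_norm f0); ring.
rewrite (splitr e); apply: ltW; apply: le_lt_trans (ler_normD _ _) _.
apply: ltrD => //; apply: le_lt_trans (ler_dist_dist _ _) _.
by rewrite distrC.
Qed.

Lemma sconv_le f g a b (N0 : nat) : (forall n, (N0 <= n)%N -> f n <= g n) ->
  sconverges f a -> sconverges g b -> a <= b.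
Proof.
move=> H Ha Hb; rewrite -subr_ge0.
apply: (sconv_ge0 (f := fun n => g n - f n)) (sconvB Hb Ha).
by move=> n /H; rewrite subr_ge0.
Qed.

Lemma sconv_conj f a : sconverges f a -> sconverges (fun n => (f n)^*) a^*.
Proof.
move=> H e e0; have [N HN] := H e e0; exists N => n /HN.
by rewrite -rmorphB /= norm_conjC.
Qed.

Lemma sconv_term0 f c (k : nat) : sconverges f 0 -> 0 <= c ->
  (forall n, (k <= n)%N -> c <= f n) -> c = 0.
Proof.
move=> Hf c0 Hc.
have [//|cne] := eqVneq c 0.
have cpos : 0 < c by rewrite lt_def cne c0.
have [N HN] := Hf c cpos.
have h1 := HN (maxn N k) (leq_maxl _ _); have h2 := Hc (maxn N k) (leq_maxr _ _).
rewrite subr0 ger0_norm in h1; last exact: le_trans c0 h2.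
by have := lt_le_trans h1 h2; rewrite ltxx.
Qed.

Lemma vconv_ip (V : lmodType K) (ip : V -> V -> K) (hV : is_hilbert ip)
  (u : nat -> V) l y :
  vconverges ip u l -> sconverges (fun n => ip (u n) y) (ip l y).
Proof.
move=> Hu e e0.
have y1 : 0 < ip y y + 1 by rewrite ltr_pwDr ?ltr01 ?(ip_ge0 hV).
have dpos : 0 < e ^+ 2 / (ip y y + 1) by rewrite divr_gt0 ?exprn_gt0.
have [N HN] := Hu _ dpos; exists N => n /HN h.
rewrite -(ipBl hV); set w := u n - l in h *.
have cs := ip_CS hV w y.
have lt2 : `|ip w y| ^+ 2 < e ^+ 2.
  apply: le_lt_trans cs _.
  have := ler_wpM2r (ip_ge0 hV y) (ltW h) => h3.
  apply: le_lt_trans h3 _.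
  by rewrite -mulrA gtr_pMr ?exprn_gt0 // mulrC ltr_pdivrMr // mul1r ltrDl ltr01.
by move: lt2; rewrite ltr_pXn2r // ?nnegrE ?normr_ge0 ?ltW.
Qed.
End Conv.

Section Comb.
Variable d : nat.
Local Notation word k := (k.-tuple 'I_d).

Lemma abelP (u v : seq 'I_d) : (abel u == abel v) = perm_eq u v.
Proof.
apply/eqP/idP => [H|H].
  apply/allP => x _ /=; move/ffunP: H => /(_ x); rewrite !ffunE => ->.
  by rewrite eqxx.
by apply/ffunP => j; rewrite !ffunE; apply: (permP H).
Qed.

Lemma abel_rcons_eq (u v : seq 'I_d) i :
  (abel (rcons u i) == abel (rcons v i)) = (abel u == abel v).
Proof.
by rewrite !abelP (perm_rcons i u) perm_sym (perm_rcons i v) perm_sym perm_cons.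
Qed.

Lemma abel_rcons (u : seq 'I_d) i j : abel (rcons u i) j = (abel u j + (i == j))%N.
Proof. by rewrite !ffunE -cats1 count_cat /= addn0. Qed.

Lemma mlen_abel (s : seq 'I_d) : mlen (abel s) = size s.
Proof.
rewrite /mlen; elim: s => [|i s IH].
  by rewrite big1 // => j _; rewrite ffunE.
rewrite /= -IH -add1n.
have -> : (\sum_(j < d) abel (i :: s) j = \sum_(j < d) ((i == j) + abel s j))%N.
  by apply: eq_bigr => j _; rewrite !ffunE.
rewrite big_split /=; congr (_ + _)%N.
rewrite (bigD1 i) //= eqxx big1 // => j /negbTE; by rewrite eq_sym => ->.
Qed.

Lemma mfact_rcons (s : seq 'I_d) i :
  mfact (abel (rcons s i)) = (mfact (abel s) * (abel s i).+1)%N.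
Proof.
rewrite /mfact (bigD1 i) //= [in RHS](bigD1 i) //= abel_rcons eqxx addn1 factS.
rewrite (eq_bigr (fun j => (abel s j)`!)); last first.
  by move=> j /negbTE ji; rewrite abel_rcons eq_sym ji addn0.
by rewrite -mulnA mulnC.
Qed.

Lemma headbehead n (T : Type) (t : n.+1.-tuple T) : thead t :: behead t = t.
Proof. by case: t => -[|x s]. Qed.

Definition hrc k (p : 'I_d * word k) : word k.+1 := rcons_tuple p.2 p.1.
Definition grc k (t : word k.+1) : 'I_d * word k :=
  (last (thead t) (behead t), belast_tuple (thead t) (behead_tuple t)).

Lemma hrcK k : cancel (@grc k) (@hrc k).
Proof. by move=> t; apply: val_inj => /=; rewrite -lastI headbehead. Qed.

Lemma grcK k : cancel (@hrc k) (@grc k).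
Proof.
move=> [i t]; rewrite /grc /hrc /=.
set r := rcons_tuple t i.
have E : rcons (belast (thead r) (behead r)) (last (thead r) (behead r)) = rcons t i.
  by rewrite -lastI headbehead.
case/rcons_inj: E => E1 E2.
by congr pair; [exact: E2 | apply: val_inj; exact: E1].
Qed.

Lemma big_word_rcons (V : nmodType) k (F : word k.+1 -> V) :
  \sum_(t : word k.+1) F t = \sum_(i < d) \sum_(t : word k) F (rcons_tuple t i).
Proof.
rewrite (reindex (@hrc k)); last exact/onW_bij/(Bijective (@grcK k) (@hrcK k)).
by rewrite pair_big /=.
Qed.

Lemma word_rcons_surj k (t : word k.+1) : exists i (s : word k), t = rcons_tuple s i.
Proof. by exists (grc t).1, (grc t).2; rewrite -[LHS]hrcK. Qed.

Lemma count_word k (s : word k) :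
  (#|[pred u : word k | abel u == abel s]| * mfact (abel s))%N = k`!.
Proof.
elim: k s => [|k IH] s.
  rewrite (tuple0 s) /mfact big1 ?muln1; last by move=> j _; rewrite ffunE.
  rewrite (eq_card (B := predT)) ?card_tuple ?expn0 // => u.
  by rewrite !inE; apply/eqP; rewrite (tuple0 u).
rewrite -sum1_card big_mkcond /= big_word_rcons big_distrl /=.
have step : forall i : 'I_d,
  ((\sum_(t : word k) (if rcons_tuple t i \in [pred u : word k.+1 | abel u == abel s] then 1 else 0)) * mfact (abel s) = k`! * abel s i)%N.
  move=> i.
  have [si0|sipos] := posnP (abel s i).
    rewrite si0 muln0 big1 ?mul0n // => t _.
    rewrite inE; case: eqP => // /ffunP /(_ i); rewrite abel_rcons si0 eqxx addn1 //.
  have iin : i \in (s : seq 'I_d) by rewrite -has_pred1 has_count -(ffunE (fun j => count_mem j s)).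
  have szr : size (rem i s) == k by rewrite size_rem // size_tuple.
  pose s' : word k := Tuple szr.
  have Es : abel s = abel (rcons s' i).
    apply/eqP; rewrite abelP /= perm_sym (perm_rcons i) perm_sym; exact: perm_to_rem.
  rewrite Es mfact_rcons abel_rcons eqxx addn1.
  rewrite (eq_bigr (fun t : word k => if t \in [pred u : word k | abel u == abel s'] then 1 else 0)%N); last first.
    by move=> t _; rewrite !inE abel_rcons_eq.
  by rewrite -big_mkcond sum1_card mulnA IH.
rewrite (eq_bigr _ (fun i _ => step i)) -big_distrr /=.
have -> : (\sum_(i < d) abel s i)%N = k.+1 by rewrite -[X in _ = X](size_tuple s) -mlen_abel.
by rewrite factS mulnC.
Qed.

Definition nf k (m : {ffun 'I_d -> 'I_k.+1}) : {ffun 'I_d -> nat} := [ffun i => (m i : nat)].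

Lemma mlen_nf k (m : {ffun 'I_d -> 'I_k.+1}) :
  mlen (nf m) = (\sum_(i < d) (m i : nat))%N.
Proof. by apply: eq_bigr => i _; rewrite ffunE. Qed.

Lemma fiber (V : nmodType) k (F : {ffun 'I_d -> nat} -> word k -> V) :
  \sum_(m : {ffun 'I_d -> 'I_k.+1} | (\sum_(i < d) (m i : nat))%N == k)
     \sum_(s : word k | abel s == nf m) F (nf m) s
  = \sum_(s : word k) F (abel s) s.
Proof.
transitivity (\sum_(m : {ffun 'I_d -> 'I_k.+1} | (\sum_(i < d) (m i : nat))%N == k)
     \sum_(s : word k | abel s == nf m) F (abel s) s).
  by apply: eq_bigr => m _; apply: eq_bigr => s /eqP ->.
rewrite (exchange_big_dep predT) //=.
apply: eq_bigr => s _.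
pose m0 : {ffun 'I_d -> 'I_k.+1} := [ffun i => inord (count_mem i s)].
have cnt i : (count_mem i s < k.+1)%N.
  by rewrite ltnS -[X in (_ <= X)%N](size_tuple s) count_size.
rewrite (big_pred1 m0) // => m; apply/andP/eqP => [[_ /eqP H]|->].
  apply/ffunP => i; apply: val_inj; rewrite ffunE /= inordK //.
  by move/ffunP: H => /(_ i); rewrite !ffunE => ->.
have Em0 : abel s = nf m0 by apply/ffunP => i; rewrite !ffunE inordK.
split; last by rewrite Em0.
apply/eqP; rewrite -[X in _ = X](size_tuple s) -mlen_abel Em0.
by rewrite mlen_nf.
Qed.


End Comb.

Section Main.
Variable R : realType.
Local Notation K := (R[i]).
Variable d : nat.
Local Notation word k := (k.-tuple 'I_d).
Variables (X Y : lmodType K) (ipX : X -> X -> K) (ipY : Y -> Y -> K).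
Hypotheses (hX : is_hilbert ipX) (hY : is_hilbert ipY).
Variables (C : X -> Y) (Cs : Y -> X) (A As : 'I_d -> X -> X).
Hypotheses (hCs : is_adjoint ipX ipY C Cs)
  (hAs : forall i, is_adjoint ipX ipX (A i) (As i)).

Definition Vs k x (s : word k) := C (wact A s x).
Definition ccn k x (n : {ffun 'I_d -> nat}) :=
  \sum_(u : word k | abel u == n) C (wact A u x).
Definition pi k x (s : word k) := @mweight R d (abel s) *: ccn k x (abel s).
Definition bk k x y := \sum_(s : word k) ipY (Vs x s) (Vs y s).

Lemma W_conj (n : {ffun 'I_d -> nat}) : (mweight R n)^* = mweight R n.
Proof. by rewrite geC0_conj // divr_ge0 ?ler0n. Qed.

Lemma cnt_W k (s : word k) :
  (#|[pred u : word k | abel u == abel s]|)%:R * (@mweight R d (abel s)) = 1.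
Proof.
rewrite /mweight mlen_abel size_tuple mulrA -natrM count_word divff //.
by rewrite pnatr_eq0 -lt0n fact_gt0.
Qed.

Lemma wact_rcons (t : seq 'I_d) i x : wact A (rcons t i) x = wact A t (A i x).
Proof. by rewrite /wact foldr_rcons. Qed.

Lemma adjA i z y : ipX (As i z) y = ipX z (A i y).
Proof. by rewrite (ipC hX) -hAs -(ipC hX). Qed.

Lemma adjC w y : ipX (Cs w) y = ipY w (C y).
Proof. by rewrite (ipC hX) -hCs -(ipC hY). Qed.

Lemma ip_wadj (t : seq 'I_d) z y : ipX (wadj As t z) y = ipX z (wact A t y).
Proof.
elim: t z => [|i t IH] z //=.
by rewrite IH adjA.
Qed.

Lemma ncpartial_ip N x y :
  ipX (ncpartial C Cs A As N x) y = \sum_(k < N.+1) bk k x y.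
Proof.
rewrite /ncpartial (ip_suml hX); apply: eq_bigr => k _.
rewrite (ip_suml hX); apply: eq_bigr => t _.
by rewrite ip_wadj adjC.
Qed.

Lemma bk_succ k x y : bk k.+1 x y = \sum_(i < d) bk k (A i x) (A i y).
Proof.
rewrite /bk big_word_rcons; apply: eq_bigr => i _; apply: eq_bigr => t _.
by rewrite /Vs /= !wact_rcons.
Qed.

Lemma pi_abel k x (u s : word k) : abel u = abel s -> pi x u = pi x s.
Proof. by rewrite /pi => ->. Qed.

Lemma pi_V k x (s : word k) :
  (forall u : word k, abel u = abel s -> Vs x u = Vs x s) -> pi x s = Vs x s.
Proof.
move=> H; rewrite /pi /ccn.
rewrite (eq_bigr (fun _ => Vs x s)); last by move=> u /eqP; apply: H.
rewrite -[X in \sum_(u | X u) _]/(fun u => u \in [pred u : word k | abel u == abel s]).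
by rewrite sumr_const -scaler_nat scalerA mulrC cnt_W scale1r.
Qed.

Lemma pi0 x (s : word 0) : pi x s = Vs x s.
Proof. by apply: pi_V => u _; rewrite (tuple0 u) (tuple0 s). Qed.

Lemma proj k x (f : word k -> Y) :
  (forall u s : word k, abel u = abel s -> f u = f s) ->
  \sum_(s : word k) ipY (f s) (pi x s) = \sum_(s : word k) ipY (f s) (Vs x s).
Proof.
move=> Hf.
transitivity (\sum_(s : word k) \sum_(u : word k | abel u == abel s)
   @mweight R d (abel s) * ipY (f s) (Vs x u)).
  apply: eq_bigr => s _; rewrite /pi (ipZr hY) W_conj (ip_sumr hY) mulr_sumr.
  done.
rewrite (exchange_big_dep predT) //=.
apply: eq_bigr => u _.
transitivity (\sum_(s in [pred s : word k | abel s == abel u])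
   @mweight R d (abel u) * ipY (f u) (Vs x u)).
  apply: eq_big => [s|s]; first by rewrite !inE eq_sym.
  by rewrite /= => /eqP E; rewrite (Hf s u) ?E.
by rewrite sumr_const -mulr_natl mulrA cnt_W mul1r.
Qed.

Lemma aux_W (N w a : K) : N * w = 1 -> w * a = N * (w * w * a).
Proof. by move=> h; rewrite !mulrA h mul1r. Qed.

Lemma ocoef_ccn k n x : mlen n = k -> ocoef C A n x = ccn k x n.
Proof. by move=> <-. Qed.

Lemma oblockE k x y :
  oblock ipY C A k x y = \sum_(s : word k) ipY (pi x s) (pi y s).
Proof.
pose G (n : {ffun 'I_d -> nat}) (s : word k) :=
  @mweight R d n * @mweight R d n * ipY (ccn k x n) (ccn k y n).
transitivity (\sum_(s : word k) G (abel s) s); last first.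
  apply: eq_bigr => s _.
  rewrite /pi (ipZl hY) (ipZr hY) W_conj /G; exact/esym/mulrA.
rewrite -(fiber G) /oblock; apply: eq_bigr => m /eqP Pm /=.
have ml : mlen (nf m) = k by rewrite mlen_nf.
rewrite -/(nf m) !(ocoef_ccn _ ml).
case: (pickP [pred s : word k | abel s == nf m]) => [s0 /eqP E0 | none].
  rewrite -E0 (eq_bigr (fun _ => G (abel s0) s0)) //.
  rewrite (eq_bigl (fun s => s \in [pred s : word k | abel s == abel s0])) //.
  rewrite sumr_const -mulr_natl.
  exact: (aux_W _ (cnt_W s0)).
rewrite big_pred0 // /ccn big_pred0 // (ip0l hY) mulr0 //.
Qed.

Lemma oblock_conj k x y : (oblock ipY C A k x y)^* = oblock ipY C A k y x.
Proof.
rewrite !oblockE rmorph_sum /=; apply: eq_bigr => s _.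
by rewrite -(ipC hY).
Qed.

Lemma oblock_ge0 k x : 0 <= oblock ipY C A k x x.
Proof. by rewrite oblockE sumr_ge0 // => s _; apply: ip_ge0. Qed.

Lemma F4 k x : bk k x x - oblock ipY C A k x x =
  \sum_(s : word k) ipY (Vs x s - pi x s) (Vs x s - pi x s).
Proof.
have P1 : \sum_(s : word k) ipY (pi x s) (Vs x s) = \sum_(s : word k) ipY (pi x s) (pi x s).
  by rewrite proj // => u s E; apply: pi_abel.
have P2 : \sum_(s : word k) ipY (Vs x s) (pi x s) = \sum_(s : word k) ipY (pi x s) (pi x s).
  apply: (can_inj (@conjCK _)); rewrite !rmorph_sum /=.
  rewrite (eq_bigr (fun s => ipY (pi x s) (Vs x s))); last by move=> s _; rewrite -(ipC hY).
  by rewrite P1; apply: eq_bigr => s _; rewrite -(ipC hY).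
rewrite oblockE /bk.
under [RHS]eq_bigr => s _ do rewrite (ipBl hY) !(ipBr hY).
rewrite !big_split /= !sumrN sumrB P1 P2; ring.
Qed.

Lemma F1 k x : \sum_(i < d) oblock ipY C A k (A i x) (A i x) - oblock ipY C A k.+1 x x =
  \sum_(i < d) \sum_(s : word k)
     ipY (pi (A i x) s - pi x (rcons_tuple s i)) (pi (A i x) s - pi x (rcons_tuple s i)).
Proof.
have Q1 : \sum_(i < d) \sum_(s : word k) ipY (pi x (rcons_tuple s i)) (pi (A i x) s)
        = oblock ipY C A k.+1 x x.
  transitivity (\sum_(i < d) \sum_(s : word k) ipY (pi x (rcons_tuple s i)) (Vs x (rcons_tuple s i))).
    apply: eq_bigr => i _; rewrite (@proj k (A i x) (fun s => pi x (rcons_tuple s i))); last first.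
      by move=> u s E; apply: pi_abel; apply/eqP; rewrite abel_rcons_eq E.
    by apply: eq_bigr => s _; rewrite /Vs /= wact_rcons.
  rewrite -(big_word_rcons (fun s => ipY (pi x s) (Vs x s))) -(@proj k.+1 x (pi x)) ?oblockE //.
  by move=> u s E; apply: pi_abel.
have Q2 : \sum_(i < d) \sum_(s : word k) ipY (pi (A i x) s) (pi x (rcons_tuple s i))
        = oblock ipY C A k.+1 x x.
  apply: (can_inj (@conjCK _)); rewrite oblock_conj -Q1 !rmorph_sum /=.
  by apply: eq_bigr => i _; rewrite rmorph_sum /=; apply: eq_bigr => s _; rewrite -(ipC hY).
have Q3 : \sum_(i < d) \sum_(s : word k) ipY (pi x (rcons_tuple s i)) (pi x (rcons_tuple s i))
        = oblock ipY C A k.+1 x x.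
  by rewrite oblockE (big_word_rcons (fun s => ipY (pi x s) (pi x s))).
have Q4 : \sum_(i < d) oblock ipY C A k (A i x) (A i x) =
   \sum_(i < d) \sum_(s : word k) ipY (pi (A i x) s) (pi (A i x) s).
  by apply: eq_bigr => i _; rewrite oblockE.
under [RHS]eq_bigr => i _ do under eq_bigr => s _ do rewrite (ipBl hY) !(ipBr hY).
rewrite Q4 -[in LHS]Q3.
under [RHS]eq_bigr => i _ do rewrite !big_split /= !sumrN sumrB.
rewrite !big_split /= !sumrN sumrB Q1 Q2 -Q3; ring.
Qed.



Lemma sum_word0 (V : nmodType) (F : word 0 -> V) : \sum_(s : word 0) F s = F [tuple].
Proof. by rewrite (big_pred1 [tuple]) // => s; rewrite (tuple0 s) /=; apply/esym/eqP. Qed.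

Lemma oblock0 x y : oblock ipY C A 0 x y = ipY (C x) (C y).
Proof. by rewrite oblockE sum_word0 !pi0. Qed.

Lemma oblock_ab k x y : C_abelian C A -> oblock ipY C A k x y = bk k x y.
Proof.
move=> Cab; rewrite oblockE /bk; apply: eq_bigr => s _.
by rewrite !pi_V // => u E; rewrite /Vs (Cab _ _ E).
Qed.

Lemma Cab_of : (forall k x (s : word k), Vs x s = pi x s) -> C_abelian C A.
Proof.
move=> H u v E x.
have sz : size u = size v by rewrite -!mlen_abel E.
have tu : size u == size v by rewrite sz.
have tv : size v == size v by [].
have := H _ x (Tuple tv); have := H _ x (Tuple tu).
rewrite /Vs /= => -> ->; apply: pi_abel => /=; exact: esym.
Qed.

Lemma allV_of (H : forall k x i (s : word k), pi (A i x) s = pi x (rcons_tuple s i)) :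
  forall k x (s : word k), Vs x s = pi x s.
Proof.
elim=> [|k IH] x s; first by rewrite pi0.
have [i [t ->]] := word_rcons_surj s.
by rewrite -H -IH /Vs /= wact_rcons.
Qed.

Lemma opartial_conj N x y : (opartial ipY C A N x y)^* = opartial ipY C A N y x.
Proof. by rewrite rmorph_sum /=; apply: eq_bigr => k _; rewrite oblock_conj. Qed.

Lemma opartial_ge0 N x : 0 <= opartial ipY C A N x x.
Proof. by rewrite sumr_ge0 // => k _; apply: oblock_ge0. Qed.

Lemma bk_ge0 k x : 0 <= bk k x x.
Proof. by rewrite sumr_ge0 // => s _; apply: ip_ge0. Qed.

Lemma psum_le (q : nat -> K) (Hq : forall j, 0 <= q j) k N : (k <= N)%N ->
  q k <= \sum_(j < N.+1) q j.
Proof.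
move=> kN; rewrite (bigD1 (Ordinal (kN : (k < N.+1)%N))) //= lerDl.
by rewrite sumr_ge0.
Qed.

Lemma psum_mono (q : nat -> K) (Hq : forall j, 0 <= q j) N M : (N <= M)%N ->
  \sum_(j < N.+1) q j <= \sum_(j < M.+1) q j.
Proof.
move=> NM; rewrite (big_ord_widen _ q (NM : (N.+1 <= M.+1)%N)).
rewrite [X in _ <= X](bigID (fun i : 'I_M.+1 => (i < N.+1)%N)) /= lerDl.
by rewrite sumr_ge0.
Qed.

Lemma psum_conv0 (q : nat -> K) (Hq : forall j, 0 <= q j) :
  sconverges (fun N => \sum_(j < N.+1) q j) 0 -> forall k, q k = 0.
Proof.
move=> H k; apply: (sconv_term0 (k := k) H (Hq k)) => N; exact: psum_le.
Qed.

Lemma core (G : X -> X) (hstab : a_output_stable ipX ipY C A)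
  (hG : is_a_gramian ipX ipY C A G) :
  (forall x : X,
     ipX (G x - \sum_(i < d) As i (G (A i x))) x <= ipX (Cs (C x)) x) /\
  [/\ ((forall x : X, G x - \sum_(i < d) As i (G (A i x)) = Cs (C x)) <->
         C_abelian C A),
      (C_abelian C A <->
         forall x : X, vconverges ipX (fun N => ncpartial C Cs A As N x) (G x)) &
      ((forall x : X, G x - \sum_(i < d) As i (G (A i x)) = Cs (C x)) <->
         forall x : X, vconverges ipX (fun N => ncpartial C Cs A As N x) (G x))].
Proof.
have Lpair : forall x y, ipX (G x - \sum_(i < d) As i (G (A i x))) y
    = ipX (G x) y - \sum_(i < d) ipX (G (A i x)) (A i y).
  move=> x y; rewrite (ipBl hX) (ip_suml hX); congr (_ - _).
  by apply: eq_bigr => i _; rewrite adjA.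
pose Dk k x := \sum_(i < d) \sum_(s : word k)
  ipY (pi (A i x) s - pi x (rcons_tuple s i)) (pi (A i x) s - pi x (rcons_tuple s i)).
have Dk_ge0 : forall x k, 0 <= Dk k x.
  by move=> x k; rewrite sumr_ge0 // => i _; rewrite sumr_ge0 // => s _; apply: ip_ge0.
have TE : forall x N, \sum_(k < N.+1) Dk k x = ipY (C x) (C x)
   + \sum_(i < d) opartial ipY C A N (A i x) (A i x) - opartial ipY C A N.+1 x x.
  move=> x N.
  have -> : opartial ipY C A N.+1 x x = ipY (C x) (C x)
      + \sum_(k < N.+1) oblock ipY C A k.+1 x x.
    rewrite /opartial big_ord_recl; congr (_ + _); first exact: oblock0.
  have H1 : \sum_(k < N.+1) oblock ipY C A k.+1 x x =
     \sum_(k < N.+1) (\sum_(i < d) oblock ipY C A k (A i x) (A i x) - Dk k x).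
    by apply: eq_bigr => k _; rewrite /Dk -F1; ring.
  rewrite H1 sumrB /opartial [in RHS]exchange_big /=; ring.
have Tconv : forall x, sconverges (fun N => \sum_(k < N.+1) Dk k x)
   (ipY (C x) (C x) + \sum_(i < d) ipX (G (A i x)) (A i x) - ipX (G x) x).
  move=> x; apply: (sconv_ext (f := fun N => ipY (C x) (C x)
     + \sum_(i < d) opartial ipY C A N (A i x) (A i x) - opartial ipY C A N.+1 x x)).
    by move=> N; rewrite TE.
  apply: sconvB; last exact: (sconv_shift (hG x x)).
  apply: sconvD; first exact: sconv_cst.
  by apply: sconv_sum => i; apply: hG.
have L_ge0 : forall x,
    0 <= ipY (C x) (C x) + \sum_(i < d) ipX (G (A i x)) (A i x) - ipX (G x) x.
  move=> x; apply: (sconv_ge0 (N0 := 0%N) _ (Tconv x)) => N _.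
  by rewrite sumr_ge0.
have part1 : forall x : X,
     ipX (G x - \sum_(i < d) As i (G (A i x))) x <= ipX (Cs (C x)) x.
  move=> x; rewrite Lpair adjC -subr_ge0.
  have -> : ipY (C x) (C x) - (ipX (G x) x - \sum_(i < d) ipX (G (A i x)) (A i x))
     = ipY (C x) (C x) + \sum_(i < d) ipX (G (A i x)) (A i x) - ipX (G x) x by ring.
  exact: L_ge0.
have E1Cab : (forall x : X, G x - \sum_(i < d) As i (G (A i x)) = Cs (C x)) ->
      C_abelian C A.
  move=> H1; apply: Cab_of; apply: allV_of => k x i s.
  have L0 : ipY (C x) (C x) + \sum_(i < d) ipX (G (A i x)) (A i x) - ipX (G x) x = 0.
    have := congr1 (fun v => ipX v x) (H1 x) => /=; rewrite Lpair adjC => <-; ring.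
  have := Tconv x; rewrite L0 => T0.
  have D0 := psum_conv0 (Dk_ge0 x) T0 k.
  have D1 := psumr_eq0P (fun i _ => sumr_ge0 _ (fun s _ => ip_ge0 hY _)) D0 (i := i) isT.
  have D2 := psumr_eq0P (fun s _ => ip_ge0 hY _) D1 (i := s) isT.
  by apply/eqP; rewrite -subr_eq0; apply/eqP; apply: (ip_eq0 hY).
have CabE1 : C_abelian C A ->
      (forall x : X, G x - \sum_(i < d) As i (G (A i x)) = Cs (C x)).
  move=> Cab x; apply: (ip_ext hX) => y; rewrite Lpair adjC.
  have rec : forall N, opartial ipY C A N.+1 x y =
      ipY (C x) (C y) + \sum_(i < d) opartial ipY C A N (A i x) (A i y).
    move=> N; rewrite {1}/opartial big_ord_recl; congr (_ + _); first exact: oblock0.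
    rewrite [RHS]exchange_big; apply: eq_bigr => k _.
    rewrite lift0 oblock_ab // bk_succ; apply: eq_bigr => i _.
    by rewrite oblock_ab.
  have E : ipX (G x) y = ipY (C x) (C y) + \sum_(i < d) ipX (G (A i x)) (A i y).
    apply: (sconv_uniq (sconv_shift (hG x y))).
    apply: (sconv_ext (f := fun N => ipY (C x) (C y)
       + \sum_(i < d) opartial ipY C A N (A i x) (A i y))).
      by move=> N; rewrite rec.
    apply: sconvD; first exact: sconv_cst.
    by apply: sconv_sum => i; apply: hG.
  by rewrite E; ring.
have [M1 [M1pos HM1]] : exists M1 : K,
    0 < M1 /\ forall x N, opartial ipY C A N x x <= M1 * ipX x x.
  case: hstab => M0 HM0; exists (`|M0| + 1); split; first by rewrite ltr_pwDr ?ltr01.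
  move=> x N; apply: le_trans (HM0 x N) _.
  have h0 : 0 <= M0 * ipX x x := le_trans (opartial_ge0 N x) (HM0 x N).
  rewrite -(ger0_norm h0) normrM (ger0_norm (ip_ge0 hX x)).
  by rewrite ler_wpM2r ?(ip_ge0 hX) // lerDl ler01.
have hGle : forall z, ipX (G z) z <= M1 * ipX z z.
  move=> z; apply: (sconv_le (N0 := 0%N) _ (hG z z) (sconv_cst _)).
  by move=> N _; apply: HM1.
have Gconj : forall u v, ipX (G u) v = (ipX (G v) u)^*.
  move=> u v; apply: (sconv_uniq (hG u v)).
  apply: (sconv_ext _ (sconv_conj (hG v u))) => N.
  exact: opartial_conj.
have CabE3 : C_abelian C A ->
    forall x : X, vconverges ipX (fun N => ncpartial C Cs A As N x) (G x).
  move=> Cab x e e0.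
  have opP : forall N u v, opartial ipY C A N u v = ipX (ncpartial C Cs A As N u) v.
    by move=> N u v; rewrite ncpartial_ip; apply: eq_bigr => k _; rewrite oblock_ab.
  have [N0 HN0] := hG x x (e / M1) (divr_gt0 e0 M1pos).
  exists N0 => N NN0.
  set z := G x - ncpartial C Cs A As N x.
  suff : ipX z z < e.
    have -> : ncpartial C Cs A As N x - G x = - z by rewrite /z opprB.
    by rewrite (ipNl hX) (ipNr hX) opprK.
  set T := ipX (G x) x - opartial ipY C A N x x.
  have hT : `|T| < e / M1 by rewrite /T distrC; apply: HN0.
  pose q k := M1 * M1 * oblock ipY C A k x x - M1 * oblock ipY C A k x z
     - M1 * oblock ipY C A k z x + oblock ipY C A k z z.
  have q_ge0 : forall k, 0 <= q k.
    move=> k.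
    have -> : q k = \sum_(s : word k) ipY (M1 *: pi x s - pi z s) (M1 *: pi x s - pi z s).
      rewrite /q !oblockE !mulr_sumr -!sumrB -big_split /=; apply: eq_bigr => s _.
      rewrite (ipBl hY) !(ipBr hY) !(ipZl hY) !(ipZr hY) (geC0_conj (ltW M1pos)); ring.
    by rewrite sumr_ge0 // => s _; apply: ip_ge0.
  have qsum : forall M, \sum_(k < M.+1) q k = M1 * M1 * opartial ipY C A M x x
      - M1 * opartial ipY C A M x z - M1 * opartial ipY C A M z x + opartial ipY C A M z z.
    by move=> M; rewrite /q /opartial !big_split /= !sumrN -!mulr_sumr.
  have Qle : \sum_(k < N.+1) q k <= M1 * M1 * ipX (G x) x - M1 * ipX (G x) z
      - M1 * ipX (G z) x + ipX (G z) z.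
    apply: (sconv_le (N0 := N) (f := fun M => \sum_(k < N.+1) q k)
                                (g := fun M => \sum_(k < M.+1) q k)).
    - by move=> M NM; apply: psum_mono.
    - exact: sconv_cst.
    apply: (sconv_ext (fun M => esym (qsum M))).
    apply: sconvD; last exact: hG.
    apply: sconvB; last exact: sconvZ (hG z x).
    apply: sconvB; last exact: sconvZ (hG x z).
    exact: sconvZ (hG x x).
  rewrite qsum in Qle.
  set r := ipX z z.
  have Exz : ipX (G x) z - opartial ipY C A N x z = r.
    by rewrite opP -(ipBl hX).
  have Ezx : ipX (G z) x - opartial ipY C A N z x = r.
    rewrite Gconj -(opartial_conj N x z) -rmorphB Exz; exact: ip_conj.
  set W := ipX (G z) z - opartial ipY C A N z z.
  have H0 : 0 <= M1 * M1 * T - M1 * r - M1 * r + W.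
    move: Qle; rewrite -subr_ge0.
    have -> : M1 * M1 * T - M1 * r - M1 * r + W = M1 * M1 * T
       - M1 * (ipX (G x) z - opartial ipY C A N x z)
       - M1 * (ipX (G z) x - opartial ipY C A N z x) + W by rewrite Exz Ezx.
    have -> : M1 * M1 * T
       - M1 * (ipX (G x) z - opartial ipY C A N x z)
       - M1 * (ipX (G z) x - opartial ipY C A N z x) + W =
       M1 * M1 * ipX (G x) x - M1 * ipX (G x) z - M1 * ipX (G z) x + ipX (G z) z -
       (M1 * M1 * opartial ipY C A N x x - M1 * opartial ipY C A N x z -
        M1 * opartial ipY C A N z x + opartial ipY C A N z z).
      by rewrite /W /T; ring.
    done.
  have H2 : W <= M1 * r.
    apply: le_trans (hGle z); rewrite -subr_ge0.
    have -> : ipX (G z) z - W = opartial ipY C A N z z by rewrite /W; ring.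
    exact: opartial_ge0.
  have H3 : 0 <= M1 * (M1 * T - r).
    apply: le_trans H0 _; rewrite -subr_ge0.
    have -> : M1 * (M1 * T - r) - (M1 * M1 * T - M1 * r - M1 * r + W) = M1 * r - W by ring.
    by rewrite subr_ge0.
  have H4 : r <= M1 * T by rewrite -subr_ge0 -(pmulr_rge0 _ M1pos).
  have Tge0 : 0 <= T.
    by rewrite -(pmulr_rge0 _ M1pos); apply: le_trans (ip_ge0 hX z) H4.
  apply: le_lt_trans H4 _.
  by rewrite -(ger0_norm Tge0) mulrC -ltr_pdivlMr.
have E3Cab : (forall x : X, vconverges ipX (fun N => ncpartial C Cs A As N x) (G x)) ->
    C_abelian C A.
  move=> H3; apply: Cab_of => k x s.
  have c1 : sconverges (fun N => ipX (ncpartial C Cs A As N x) x) (ipX (G x) x).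
    by apply: (vconv_ip hX); apply: H3.
  pose q k := bk k x x - oblock ipY C A k x x.
  have qge : forall k, 0 <= q k.
    by move=> j; rewrite /q F4 sumr_ge0 // => t _; apply: ip_ge0.
  have qc : sconverges (fun N => \sum_(j < N.+1) q j) 0.
    apply: (sconv_ext (f := fun N => ipX (ncpartial C Cs A As N x) x - opartial ipY C A N x x)).
      by move=> N; rewrite ncpartial_ip /opartial /q sumrB.
    rewrite -(subrr (ipX (G x) x)); exact: sconvB c1 (hG x x).
  have := psum_conv0 qge qc k; rewrite /q F4 => h.
  have := psumr_eq0P (fun t _ => ip_ge0 hY _) h (i := s) isT.
  by move=> /(ip_eq0 hY) /eqP; rewrite subr_eq0 => /eqP.
split; first exact: part1.
split.
- by split; [exact: E1Cab | exact: CabE1].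
- by split; [exact: CabE3 | exact: E3Cab].
- by split => H; [apply: CabE3; apply: E1Cab | apply: CabE1; apply: E3Cab].
Qed.

End Main.


Unset Implicit Arguments.

Theorem proposition3p3 (R : realType) (d : nat)
  (X Y : lmodType R[i]) (ipX : X -> X -> R[i]) (ipY : Y -> Y -> R[i])
  (hX : is_hilbert ipX) (hY : is_hilbert ipY)
  (C : X -> Y) (Cs : Y -> X) (A As : 'I_d -> X -> X)
  (hC : bounded_linear ipX ipY C) (hCs : is_adjoint ipX ipY C Cs)
  (hA : forall i, bounded_linear ipX ipX (A i))
  (hAs : forall i, is_adjoint ipX ipX (A i) (As i))
  (hstab : a_output_stable ipX ipY C A)
  (G : X -> X) (hG : is_a_gramian ipX ipY C A G) :
  (forall x : X,
     ipX (G x - \sum_(i < d) As i (G (A i x))) x <= ipX (Cs (C x)) x) /\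
  [/\ ((forall x : X, G x - \sum_(i < d) As i (G (A i x)) = Cs (C x)) <->
         C_abelian C A),
      (C_abelian C A <->
         forall x : X, vconverges ipX (fun N => ncpartial C Cs A As N x) (G x)) &
      ((forall x : X, G x - \sum_(i < d) As i (G (A i x)) = Cs (C x)) <->
         forall x : X, vconverges ipX (fun N => ncpartial C Cs A As N x) (G x))].
Proof.
exact: (core hX hY hCs hAs hstab hG).
Qed.
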